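(* The term rewriting system $\mathcal{R}=(\Sigma,V,\geq_s,\Delta)$ described in the context is terminating: for every term $\tau\in T[\Sigma,V]$, every sequence of rewriting steps starting from $\tau$ is finite.
   Context: $\mathbb{F}=\mathbb{GF}(2^n)$. Signature $\Sigma=\mathbb{F}\cup\{\oplus,\otimes,f_1,\dots,f_t\}$: elements of $\mathbb{F}$ are constants, $\oplus,\otimes$ binary (field addition and multiplication), $f_1,\dots,f_t$ unary symbols for affine transformations, each $f$ having an associated affine constant $c_f\in\mathbb{F}$. $V$ is a set of variables, $\Sigma\cap V=\emptyset$, and $\geq_s$ is a total order on $V\uplus\Sigma$. Terms $T[\Sigma,V]$: smallest set containing $\mathbb{F}\cup V$ and closed under $\oplus$, $\otimes$, $f_j$; $T_{\backslash\oplus}(\Sigma,V)$ = terms not using $\oplus$. A factor is a term in $\mathbb{F}\cup V$ or of the form $f_i(\tau')$ with $\tau'\in T_{\backslash\oplus}(\Sigma,V)$; a monomial is a product $\alpha_1\otimes\cdots\otimes\alpha_k$ ($k\ge1$) of nonzero factors (sums and products treated as flat sequences). Factor order $\geq_l$: $\alpha\geq_l\alpha'$ iff (i) $\alpha,\alpha'\in\mathbb{F}\cup V$ and $\alpha\geq_s\alpha'$; or (ii) $\alpha=f(\tau)$, $\alpha'=f'(\tau')$ with $f\geq_s f'$, or $f=f'$ and $\tau\geq_p\tau'$; or (iii) $\alpha=f(\tau)$ and $f\geq_s\alpha'$, or $\alpha'=f(\tau)$ and $\alpha\geq_s f$. Monomial order $\geq_p$: lexicographic comparison (w.r.t. $\geq_l$)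 of the factor sequences sorted in descending $\geq_l$-order. Rules $\Delta$ (with $\tau,\tau_1,\tau_2$ terms, $m_i$ monomials, $\alpha_i$ factors, $f$ an affine symbol with constant $c$): R1: $m_1\oplus\cdots\oplus m_k\mapsto m'_1\oplus\cdots\oplus m'_k$ where $(m'_1,\dots,m'_k)={\tt sort}_{\geq_p}(m_1,\dots,m_k)\neq(m_1,\dots,m_k)$; R2: $\alpha_1\cdots\alpha_k\mapsto\alpha'_1\cdots\alpha'_k$ where $(\alpha'_1,\dots,\alpha'_k)={\tt sort}_{\geq_l}(\alpha_1,\dots,\alpha_k)\neq(\alpha_1,\dots,\alpha_k)$; R3: $\tau\oplus\tau\mapsto0$; R4: $\tau\otimes0\mapsto0$; R5: $0\otimes\tau\mapsto0$; R6: $\tau\oplus0\mapsto\tau$; R7: $0\oplus\tau\mapsto\tau$; R8: $\tau\otimes1\mapsto\tau$; R9: $1\otimes\tau\mapsto\tau$; R10: $(\tau_1\oplus\tau_2)\otimes\tau\mapsto(\tau_1\otimes\tau)\oplus(\tau_2\otimes\tau)$; R11: $\tau\otimes(\tau_1\oplus\tau_2)\mapsto(\tau\otimes\tau_1)\oplus(\tau\otimes\tau_2)$; R12: $f(\tau_1\oplus\tau_2)\mapsto f(\tau_1)\oplus f(\tau_2)\oplus c$; R13: $f(0)\mapsto c$. A rewriting step replaces one occurrence of a subterm matching a left-hand side by the corresponding right-hand side. *)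

(* Defs.v *)
From mathcomp Require Import all_boot all_order all_algebra.
Set Implicit Arguments. Unset Strict Implicit. Unset Printing Implicit Defensive.
Import GRing.Theory.
Local Open Scope ring_scope.

Section TRS.
Variables (F : finFieldType) (V : Type) (t : nat).

(* Terms T[Sigma,V]: constants of F, variables, (+), (x), and f_1..f_t
   (affine symbol f_i is represented by i : 'I_t). Sums and products are
   binary here; "flat sequences" is modelled by rewriting modulo
   associativity (see [aeq] and [step] below). *)
Inductive term : Type :=
| Cst of F
| Var of V
| Add of term & term
| Mul of term & term
| Aff of 'I_t & term.

Inductive sym : Type :=
| SVar of V
| SCst of F
| SPlus
| STimes
| SAff of 'I_t.

Definition total_order (ges : sym -> sym -> bool) : Prop :=
  [/\ forall x, ges x x,
      forall x y, ges x y -> ges y x -> x = y,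
      forall x y z, ges x y -> ges y z -> ges x z
    & forall x y, ges x y || ges y x].

Fixpoint term_size (u : term) : nat :=
  match u with
  | Cst _ | Var _ => 1
  | Add a b | Mul a b => (term_size a + term_size b).+1
  | Aff _ a => (term_size a).+1
  end.

Fixpoint noplus (u : term) : bool :=
  match u with
  | Cst _ | Var _ => true
  | Add _ _ => false
  | Mul a b => noplus a && noplus b
  | Aff _ a => noplus a
  end.

Definition is_factor (u : term) : bool :=
  match u with
  | Cst _ | Var _ => true
  | Aff _ a => noplus a
  | _ => false
  end.

Definition nonzero_factor (u : term) : bool :=
  match u with
  | Cst a => a != 0
  | _ => is_factor u
  end.

Fixpoint prod_seq (u : term) : seq term :=
  match u with
  | Mul a b => prod_seq a ++ prod_seq b
  | _ => [:: u]
  end.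

Definition is_monomial (u : term) : bool := all nonzero_factor (prod_seq u).

Fixpoint bigsum (s : seq term) : term :=
  match s with
  | [::] => Cst 0
  | [:: x] => x
  | x :: s' => Add x (bigsum s')
  end.

Fixpoint bigprod (s : seq term) : term :=
  match s with
  | [::] => Cst 1
  | [:: x] => x
  | x :: s' => Mul x (bigprod s')
  end.

Fixpoint lex_ge (r : term -> term -> bool) (s s' : seq term) : bool :=
  match s, s' with
  | _, [::] => true
  | [::], _ :: _ => false
  | x :: s1, y :: s1' =>
      if r x y then (if r y x then lex_ge r s1 s1' else true) else false
  end.

Variable ges : sym -> sym -> bool.

Definition sym_of (u : term) : option sym :=
  match u with
  | Cst a => Some (SCst a)
  | Var v => Some (SVar v)
  | _ => None
  end.

Definition ges_opt (x y : option sym) : bool :=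
  match x, y with Some a, Some b => ges a b | _, _ => false end.

(* The factor order >=_l and the monomial order >=_p, mutually recursive.
   They are computed with a fuel argument k; [geq_l]/[geq_p] below supply
   fuel term_size a + term_size b, which is always sufficient (every
   recursive comparison is between subterms of strictly smaller total size). *)
Fixpoint gl (k : nat) (a b : term) {struct k} : bool :=
  match k with
  | 0 => false
  | k'.+1 =>
    let gp := fun x y =>
      lex_ge (gl k') (sort (gl k') (prod_seq x)) (sort (gl k') (prod_seq y)) in
    match a, b with
    | Aff f x, Aff g y =>
        (ges (SAff f) (SAff g) && (f != g)) || ((f == g) && gp x y)
    | Aff f _, _ => ges_opt (Some (SAff f)) (sym_of b)
    | _, Aff g _ => ges_opt (sym_of a) (Some (SAff g))
    | _, _ => ges_opt (sym_of a) (sym_of b)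
    end
  end.

Definition geq_l (a b : term) : bool := gl (term_size a + term_size b) a b.

Definition geq_p (x y : term) : bool :=
  let k := term_size x + term_size y in
  lex_ge (gl k) (sort (gl k) (prod_seq x)) (sort (gl k) (prod_seq y)).

Variable c : 'I_t -> F.

Inductive rule : term -> term -> Prop :=
| R1 (ms : seq term) : all is_monomial ms -> sort geq_p ms <> ms ->
    rule (bigsum ms) (bigsum (sort geq_p ms))
| R2 (fs : seq term) : all is_factor fs -> sort geq_l fs <> fs ->
    rule (bigprod fs) (bigprod (sort geq_l fs))
| R3 u : rule (Add u u) (Cst 0)
| R4 u : rule (Mul u (Cst 0)) (Cst 0)
| R5 u : rule (Mul (Cst 0) u) (Cst 0)
| R6 u : rule (Add u (Cst 0)) u
| R7 u : rule (Add (Cst 0) u) u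
| R8 u : rule (Mul u (Cst 1)) u
| R9 u : rule (Mul (Cst 1) u) u
| R10 u u1 u2 : rule (Mul (Add u1 u2) u) (Add (Mul u1 u) (Mul u2 u))
| R11 u u1 u2 : rule (Mul u (Add u1 u2)) (Add (Mul u u1) (Mul u u2))
| R12 f u1 u2 : rule (Aff f (Add u1 u2)) (Add (Add (Aff f u1) (Aff f u2)) (Cst (c f)))
| R13 f : rule (Aff f (Cst 0)) (Cst (c f)).

Inductive rstep : term -> term -> Prop :=
| RS_root u v : rule u v -> rstep u v
| RS_AddL a a' b : rstep a a' -> rstep (Add a b) (Add a' b)
| RS_AddR a b b' : rstep b b' -> rstep (Add a b) (Add a b')
| RS_MulL a a' b : rstep a a' -> rstep (Mul a b) (Mul a' b)
| RS_MulR a b b' : rstep b b' -> rstep (Mul a b) (Mul a b')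
| RS_Aff f a a' : rstep a a' -> rstep (Aff f a) (Aff f a').

Inductive aeq : term -> term -> Prop :=
| AE_refl u : aeq u u
| AE_sym u v : aeq u v -> aeq v u
| AE_trans u v w : aeq u v -> aeq v w -> aeq u w
| AE_Add a a' b b' : aeq a a' -> aeq b b' -> aeq (Add a b) (Add a' b')
| AE_Mul a a' b b' : aeq a a' -> aeq b b' -> aeq (Mul a b) (Mul a' b')
| AE_Aff f a a' : aeq a a' -> aeq (Aff f a) (Aff f a')
| AE_AddA a b d : aeq (Add (Add a b) d) (Add a (Add b d))
| AE_MulA a b d : aeq (Mul (Mul a b) d) (Mul a (Mul b d)).

Definition step (u v : term) : Prop :=
  exists u' v', [/\ aeq u u', rstep u' v' & aeq v' v].

Definition terminating : Prop :=
  forall s : nat -> term, ~ (forall i, step (s i) (s i.+1)).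

End TRS.

(* Main.v *)
Require Import Defs.
From mathcomp Require Import all_boot all_order all_algebra.
From Stdlib Require Import ClassicalEpsilon FunctionalExtensionality.
From HB Require Import structures.
From mathcomp Require Import zify.
From Stdlib Require Import Lia.
Set Implicit Arguments. Unset Strict Implicit. Unset Printing Implicit Defensive.

Definition ceq {T : Type} (x y : T) : bool :=
  if excluded_middle_informative (x = y) then true else false.
Lemma ceqP {T : Type} : Equality.axiom (@ceq T).
Proof. move=> x y; rewrite /ceq; case: excluded_middle_informative => h; by constructor. Qed.

Inductive rose (S : Type) := Node of S & seq (rose S).
HB.instance Definition _ (S : Type) := hasDecEq.Build (rose S) ceqP.

Fixpoint lexG {T} (r : rel T) (s s' : seq T) : bool :=
  match s, s' with
  | _, [::] => true
  | [::], _ :: _ => false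
  | x :: s1, y :: s1' => if r x y then (if r y x then lexG r s1 s1' else true) else false
  end.

Lemma lexG_map T T' (f : T' -> T) r s s' : lexG r (map f s) (map f s') = lexG (relpre f r) s s'.
Proof. by elim: s s' => [|x s IH] [|y s'] //=; rewrite IH. Qed.

Lemma lexG_eq_in T (P : pred T) (r1 r2 : rel T) s s' :
  (forall x y, P x -> P y -> r1 x y = r2 x y) -> all P s -> all P s' ->
  lexG r1 s s' = lexG r2 s s'.
Proof.
move=> H; elim: s s' => [|x s IH] [|y s'] //= /andP[Px Ps] /andP[Py Ps'].
by rewrite !H // IH.
Qed.

Lemma eq_in_sort T (P : pred T) (r1 r2 : rel T) s :
  (forall x y, P x -> P y -> r1 x y = r2 x y) -> all P s -> sort r1 s = sort r2 s.
Proof.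
move=> H /all_sigP[s' ->]; rewrite !sort_map; congr map; congr sort.
apply: functional_extensionality => x; apply: functional_extensionality => y.
by apply: H; [exact: (valP x) | exact: (valP y)].
Qed.

Section Rose.
Variables (S : eqType) (ges : S -> S -> bool).
Hypotheses (ges_refl : forall x, ges x x)
  (ges_anti : forall x y, ges x y -> ges y x -> x = y)
  (ges_trans : forall x y z, ges x y -> ges y z -> ges x z)
  (ges_total : forall x y, ges x y || ges y x).

Fixpoint cmp (a b : rose S) {struct a} : comparison :=
  let: Node s cs := a in let: Node s' ds := b in
  if s == s' then
    (fix lx (cs ds : seq (rose S)) {struct cs} : comparison :=
       match cs, ds with
       | [::], [::] => Eq
       | [::], _ :: _ => Lt
       | _ :: _, [::] => Gt
       | x :: cs', y :: ds' => match cmp x y with Eq => lx cs' ds' | o => o end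
       end) cs ds
  else if ges s s' then Gt else Lt.

Fixpoint lexc (cs ds : seq (rose S)) : comparison :=
  match cs, ds with
  | [::], [::] => Eq
  | [::], _ :: _ => Lt
  | _ :: _, [::] => Gt
  | x :: cs', y :: ds' => match cmp x y with Eq => lexc cs' ds' | o => o end
  end.

Lemma cmpE s cs s' ds : cmp (Node s cs) (Node s' ds) =
  if s == s' then lexc cs ds else if ges s s' then Gt else Lt.
Proof.
rewrite /=; case: (s == s') => //.
Qed.

Definition rose_ind' (P : rose S -> Prop)
  (H : forall s cs, (forall x, List.In x cs -> P x) -> P (Node s cs)) : forall r, P r :=
  fix go r := let: Node s cs := r in H s cs
    ((fix gol (cs : seq (rose S)) : forall x, List.In x cs -> P x :=
       match cs with
       | [::] => fun x (hx : List.In x [::]) => False_ind _ hx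
       | y :: cs' => fun x hx => match hx with
                                  | or_introl e => eq_ind y P (go y) x e
                                  | or_intror h => gol cs' x h end
       end) cs).

Lemma cmp_sym a b : cmp b a = CompOpp (cmp a b).
Proof.
elim/rose_ind': a b => s cs IH [s' ds]; rewrite !cmpE.
case: (eqVneq s s') => [e|ne].
  subst s'.
  elim: cs ds IH => [|x cs IHc] [|y ds] //= IH.
  rewrite IH; last by left.
  case: (cmp x y) => //=; apply: IHc => z hz; apply: IH; by right.
have := ges_total s s'; case E1: (ges s s'); case E2: (ges s' s) => //= _.
by move/eqP: ne; case; apply: ges_anti.
Qed.

Lemma cmp_refl a : cmp a a = Eq.
Proof.
elim/rose_ind': a => s cs IH; rewrite cmpE eqxx.
elim: cs IH => [|x cs IHc] //= IH.
rewrite IH; last by left.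
apply: IHc => z hz; apply: IH; by right.
Qed.

Lemma cmp_eq a b : cmp a b = Eq -> a = b.
Proof.
elim/rose_ind': a b => s cs IH [s' ds]; rewrite cmpE.
case: eqP => [<-|ne]; last by case: ifP.
elim: cs ds IH => [|x cs IHc] [|y ds] //= IH.
case E: (cmp x y) => // h.
rewrite (IH x (or_introl erefl) y E).
have := IHc ds (fun z hz => IH z (or_intror hz)) h; by case=> ->.
Qed.

Lemma cmp_trans a b c : cmp a b = Gt -> cmp b c = Gt -> cmp a c = Gt.
Proof.
elim/rose_ind': a b c => s cs IH [s' ds] [s'' es]; rewrite !cmpE.
case: (eqVneq s s') => [e1|ne1]; case: (eqVneq s s'') => [e2|ne2]; subst.
- rewrite eqxx.
  elim: cs ds es IH => [|x cs IHc] [|y ds] [|z es] //= IH.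
  case E1: (cmp x y) => //; case E2: (cmp y z) => //.
  + move: (cmp_eq E1) (cmp_eq E2) => -> ->; rewrite cmp_refl.
    apply: IHc => w hw; apply: IH; by right.
  + by move: (cmp_eq E1) => ->; rewrite E2.
  + by move: (cmp_eq E2) => <-; rewrite E1.
  + by rewrite (IH x (or_introl erefl) y z E1 E2).
- by rewrite (negbTE ne2).
- rewrite eq_sym in ne1; rewrite (negbTE ne1); case: ifP => g1 // _; case: ifP => g2 // _.
  by exfalso; move/eqP: ne1; apply; apply: ges_anti.
- case: ifP => g1 // _; case: (eqVneq s' s'') => [e|ne3] h.
    by subst; rewrite g1.
  by move: h; case: ifP => g2 // _; rewrite (ges_trans g1 g2).
Qed.

Definition rle (a b : rose S) : bool := if cmp a b is Lt then false else true.

Lemma rle_total : total rle.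
Proof. move=> a b; rewrite /rle (cmp_sym a b); by case: (cmp a b). Qed.

Lemma rle_trans : transitive rle.
Proof.
move=> b a c; rewrite /rle.
case E1: (cmp a b) => // _; case E2: (cmp b c) => // _.
- by rewrite (cmp_eq E1) (cmp_eq E2) cmp_refl.
- by rewrite (cmp_eq E1) E2.
- by rewrite -(cmp_eq E2) E1.
- by rewrite (cmp_trans E1 E2).
Qed.

Lemma rle_anti a b : rle a b -> rle b a -> a = b.
Proof.
rewrite /rle (cmp_sym a b); case E: (cmp a b) => // _ _; exact: cmp_eq.
Qed.

Lemma lexG_rle cs ds : lexG rle cs ds = (if lexc cs ds is Lt then false else true).
Proof.
elim: cs ds => [|x cs IH] [|y ds] //=.
rewrite /rle (cmp_sym x y) IH; by case: (cmp x y).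
Qed.

Lemma rleE s cs s' ds : rle (Node s cs) (Node s' ds) =
  if s == s' then lexG rle cs ds else ges s s'.
Proof. rewrite /rle cmpE lexG_rle; case: ifP => //; by case: ifP. Qed.

Lemma lexc_sym cs ds : lexc ds cs = CompOpp (lexc cs ds).
Proof.
elim: cs ds => [|x cs IH] [|y ds] //=; rewrite (cmp_sym x y).
by case: (cmp x y) => //=.
Qed.

Lemma lexc_refl cs : lexc cs cs = Eq.
Proof. by elim: cs => //= x cs ->; rewrite cmp_refl. Qed.

Lemma lexc_eq cs ds : lexc cs ds = Eq -> cs = ds.
Proof.
elim: cs ds => [|x cs IH] [|y ds] //=; case E: (cmp x y) => // h.
by rewrite (cmp_eq E) (IH _ h).
Qed.

Lemma lexc_trans cs ds es : lexc cs ds = Gt -> lexc ds es = Gt -> lexc cs es = Gt.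
Proof.
elim: cs ds es => [|x cs IH] [|y ds] [|z es] //=.
case E1: (cmp x y) => //; case E2: (cmp y z) => //.
- by move: (cmp_eq E1) (cmp_eq E2) => -> ->; rewrite cmp_refl; apply: IH.
- by move: (cmp_eq E1) => ->; rewrite E2.
- by move: (cmp_eq E2) => <-; rewrite E1.
- by rewrite (cmp_trans E1 E2).
Qed.

Lemma lex_total : total (lexG rle).
Proof. move=> a b; rewrite !lexG_rle (lexc_sym a b); by case: (lexc a b). Qed.

Lemma lex_trans : transitive (lexG rle).
Proof.
move=> b a c; rewrite !lexG_rle.
case E1: (lexc a b) => // _; case E2: (lexc b c) => // _.
- by rewrite (lexc_eq E1) (lexc_eq E2) lexc_refl.
- by rewrite (lexc_eq E1) E2.
- by rewrite -(lexc_eq E2) E1.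
- by rewrite (lexc_trans E1 E2).
Qed.

Lemma lex_anti a b : lexG rle a b -> lexG rle b a -> a = b.
Proof.
rewrite !lexG_rle (lexc_sym a b); case E: (lexc a b) => // _ _; exact: lexc_eq.
Qed.

End Rose.


HB.instance Definition _ (F : finFieldType) (V : Type) (t : nat) :=
  hasDecEq.Build (sym F V t) ceqP.
HB.instance Definition _ (F : finFieldType) (V : Type) (t : nat) :=
  hasDecEq.Build (term F V t) ceqP.

Section Main.
Variables (F : finFieldType) (V : Type) (t : nat).
Variable ges : sym F V t -> sym F V t -> bool.
Hypothesis Hges : total_order ges.
Variable c : 'I_t -> F.

Local Notation T := (term F V t).
Local Notation S := (sym F V t).
Local Notation R := (rose S).

Let ges_refl : forall x, ges x x. Proof. by case: Hges. Qed.
Let ges_anti : forall x y, ges x y -> ges y x -> x = y. Proof. by case: Hges. Qed.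
Let ges_trans : forall x y z, ges x y -> ges y z -> ges x z. Proof. by case: Hges. Qed.
Let ges_total : forall x y, ges x y || ges y x. Proof. by case: Hges. Qed.

Local Notation rl := (rle ges).
Let rl_total : total rl. Proof. by apply: rle_total. Qed.
Let rl_trans : transitive rl. Proof. by apply: rle_trans. Qed.
Let rl_anti : forall a b, rl a b -> rl b a -> a = b. Proof. by apply: rle_anti. Qed.
Let lx_total : total (lexG rl). Proof. by apply: lex_total. Qed.
Let lx_trans : transitive (lexG rl). Proof. by apply: lex_trans. Qed.
Let lx_anti : forall a b, lexG rl a b -> lexG rl b a -> a = b. Proof. by apply: lex_anti. Qed.

Lemma lex_geE (r : T -> T -> bool) s s' : lex_ge r s s' = lexG r s s'.
Proof. by elim: s s' => [|x s IH] [|y s'] //=; rewrite IH. Qed.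

Lemma SAff_eq (f g : 'I_t) : (SAff F V f == SAff F V g) = (f == g).
Proof. by apply/eqP/eqP => [[]|->]. Qed.

Fixpoint keyprod (u : T) : seq R :=
  match u with
  | Cst a => [:: Node (SCst V t a) [::]]
  | Var v => [:: Node (SVar F t v) [::]]
  | Add _ _ => [:: Node (SPlus F V t) [::]]
  | Mul a b => keyprod a ++ keyprod b
  | Aff f a => [:: Node (SAff F V f) (sort rl (keyprod a))]
  end.

Definition junk : R := Node (STimes F V t) [::].
Definition key (u : T) : R := head junk (keyprod u).

Fixpoint sum_seq (u : T) : seq T :=
  match u with Add a b => sum_seq a ++ sum_seq b | _ => [:: u] end.

Lemma keyprod_prod (u : T) : keyprod u = map key (prod_seq u).
Proof. elim: u => //= a IHa b IHb; by rewrite map_cat -IHa -IHb. Qed.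

Lemma size_prod (u : T) : all (fun e : T => term_size e <= term_size u) (prod_seq u).
Proof.
elim: u => [a|v|a IHa b IHb|a IHa b IHb|f a IHa] /=; rewrite ?leqnn //.
rewrite all_cat; apply/andP; split.
  by apply: sub_all IHa => e /= h; apply: leq_trans h _; apply: leqW; apply: leq_addr.
by apply: sub_all IHb => e /= h; apply: leq_trans h _; apply: leqW; apply: leq_addl.
Qed.

Lemma noplus_prod (u : T) : noplus u -> all (@is_factor F V t) (prod_seq u).
Proof.
elim: u => [a|v|a IHa b IHb|a IHa b IHb|f a IHa] //=.
by case/andP=> /IHa; rewrite all_cat => -> /IHb ->.
by rewrite andbT.
Qed.

Lemma factor_prod (e : T) : is_factor e -> prod_seq e = [:: e].
Proof. by case: e. Qed.

Lemma fuel k (a b : T) : is_factor a -> is_factor b -> maxn (term_size a) (term_size b) <= k ->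
  gl ges k a b = rl (key a) (key b).
Proof.
elim: k a b => [|k IH] a b.
  by move=> _ _; rewrite geq_max => /andP[h _]; case: a h.
have IH' : forall e1 e2 : T, (is_factor e1 && (term_size e1 <= k)) ->
    (is_factor e2 && (term_size e2 <= k)) -> gl ges k e1 e2 = relpre key rl e1 e2.
  move=> e1 e2 /andP[f1 s1] /andP[f2 s2]; apply: IH => //; by rewrite geq_max s1 s2.
case: a => [x|v|||f x]; case: b => [y|w|||g y] //= Ha Hb;
  rewrite /key /= ?rleE //=;
  try (by move=> _; case: eqP => [e|_] //; (try discriminate e); rewrite e ges_refl).
rewrite geq_max !ltnS => /andP[sx sy].
have PX : all (fun e : T => is_factor e && (term_size e <= k)) (prod_seq x).
  apply/allP => e he; rewrite (allP (noplus_prod Ha)) //=.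
  by apply: leq_trans sx; apply: (allP (size_prod x)).
have PY : all (fun e : T => is_factor e && (term_size e <= k)) (prod_seq y).
  apply/allP => e he; rewrite (allP (noplus_prod Hb)) //=.
  by apply: leq_trans sy; apply: (allP (size_prod y)).
rewrite SAff_eq lex_geE.
rewrite (eq_in_sort IH' PX) (eq_in_sort IH' PY).
rewrite (lexG_eq_in IH') ?all_sort //.
rewrite -lexG_map -!sort_map -!keyprod_prod.
by case: (f == g); rewrite ?andbT ?andbF ?orbF.
Qed.

Lemma geq_l_key (a b : T) : is_factor a -> is_factor b -> geq_l ges a b = rl (key a) (key b).
Proof.
move=> Ha Hb; rewrite /geq_l fuel //.
by rewrite geq_max leq_addr leq_addl.
Qed.

Definition monokey (u : T) := sort rl (keyprod u).

Lemma monomial_factors (u : T) : is_monomial u -> all (@is_factor F V t) (prod_seq u).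
Proof.
rewrite /is_monomial => h; apply: sub_all h => e; by case: e.
Qed.

Lemma geq_p_key (x y : T) : is_monomial x -> is_monomial y ->
  geq_p ges x y = lexG rl (monokey x) (monokey y).
Proof.
move=> Hx Hy; rewrite /geq_p lex_geE.
set k := term_size x + term_size y.
have IH' : forall e1 e2 : T, (is_factor e1 && (term_size e1 <= k)) ->
    (is_factor e2 && (term_size e2 <= k)) -> gl ges k e1 e2 = relpre key rl e1 e2.
  move=> e1 e2 /andP[f1 s1] /andP[f2 s2]; apply: fuel => //; by rewrite geq_max s1 s2.
have PX : all (fun e : T => is_factor e && (term_size e <= k)) (prod_seq x).
  apply/allP => e he; rewrite (allP (monomial_factors Hx)) //=.
  by apply: leq_trans (leq_addr _ _); apply: (allP (size_prod x)).
have PY : all (fun e : T => is_factor e && (term_size e <= k)) (prod_seq y).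
  apply/allP => e he; rewrite (allP (monomial_factors Hy)) //=.
  by apply: leq_trans (leq_addl _ _); apply: (allP (size_prod y)).
rewrite (eq_in_sort IH' PX) (eq_in_sort IH' PY).
rewrite (lexG_eq_in IH') ?all_sort //.
by rewrite -lexG_map -!sort_map -!keyprod_prod.
Qed.


Fixpoint I (u : T) : nat :=
  match u with
  | Cst _ | Var _ => 2
  | Add a b => I a + I b + 1
  | Mul a b => I a * I b
  | Aff _ a => 5 * I a
  end.

Lemma I_ge2 (u : T) : 2 <= I u.
Proof.
elim: u => //= [a IHa b IHb|a IHa b IHb|f a IHa].
- by apply: leq_trans IHa _; rewrite -addnA leq_addr.
- by apply: leq_trans (leq_mul IHa IHb).
- by apply: leq_trans IHa _; apply: leq_pmull.
Qed.

Definition fkey (u : T) : option R := if is_factor u then Some (key u) else None.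
Definition mkey (u : T) : option (seq R) := if is_monomial u then Some (monokey u) else None.
Definition sumkeys (u : T) := map mkey (sum_seq u).
Definition prodkeys (u : T) := map fkey (prod_seq u).

Definition badF (x y : option R) : bool :=
  if x is Some a then (if y is Some b then ~~ rl a b else false) else false.
Definition badM (x y : option (seq R)) : bool :=
  if x is Some a then (if y is Some b then ~~ lexG rl a b else false) else false.

Definition cross {A : Type} (bad : A -> A -> bool) (s1 s2 : seq A) : nat :=
  \sum_(x <- s1) count (bad x) s2.
Fixpoint inv {A : Type} (bad : A -> A -> bool) (s : seq A) : nat :=
  if s is x :: s' then count (bad x) s' + inv bad s' else 0.

Fixpoint M (u : T) : nat :=
  match u with
  | Add a b => M a + M b + cross badM (sumkeys a) (sumkeys b)
  | Mul a b => M a + M b + cross badF (prodkeys a) (prodkeys b)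
  | Aff _ a => M a
  | _ => 0
  end.

Lemma cross_catl {A : Type} (bad : A -> A -> bool) s1 s2 s3 :
  cross bad (s1 ++ s2) s3 = cross bad s1 s3 + cross bad s2 s3.
Proof. by rewrite /cross big_cat. Qed.

Lemma cross_catr {A : Type} (bad : A -> A -> bool) s1 s2 s3 :
  cross bad s1 (s2 ++ s3) = cross bad s1 s2 + cross bad s1 s3.
Proof. rewrite /cross -big_split /=; apply: eq_bigr => x _; exact: count_cat. Qed.

Lemma inv_cat {A : Type} (bad : A -> A -> bool) s1 s2 :
  inv bad (s1 ++ s2) = inv bad s1 + inv bad s2 + cross bad s1 s2.
Proof.
elim: s1 => [|x s1 IH] /=; first by rewrite /cross big_nil addn0.
rewrite IH count_cat /cross big_cons; lia.
Qed.

Lemma cross_perm {A : eqType} (bad : A -> A -> bool) s1 s1' s2 s2' :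
  perm_eq s1 s1' -> perm_eq s2 s2' -> cross bad s1 s2 = cross bad s1' s2'.
Proof.
move=> p1 p2; rewrite /cross (perm_big _ p1) /=; apply: eq_bigr => x _.
by apply/permP.
Qed.

Lemma inv0 {A : Type} (r : rel A) s :
  (inv (fun x y => ~~ r x y) s == 0) = pairwise r s.
Proof.
elim: s => //= x s <-; rewrite addn_eq0; congr andb.
rewrite -[count _ _ == 0]negbK -lt0n -has_count.
by rewrite (@eq_has _ _ (predC (r x))) // has_predC negbK.
Qed.

Lemma inv_sort {A : Type} (r : rel A) s :
  total r -> transitive r -> inv (fun x y => ~~ r x y) (sort r s) = 0.
Proof.
move=> tot tr; apply/eqP; rewrite inv0 -sorted_pairwise //; exact: sort_sorted.
Qed.

Lemma inv_unsorted {A : Type} (r : rel A) s :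
  transitive r -> sort r s <> s -> 0 < inv (fun x y => ~~ r x y) s.
Proof.
move=> tr ne; rewrite lt0n inv0; apply/negP => /pairwise_sorted /(sorted_sort tr).
exact: ne.
Qed.

Lemma sort_perm_rl s1 s2 : perm_eq s1 s2 -> sort rl s1 = sort rl s2.
Proof.
have anti : antisymmetric rl by move=> a b /andP[h1 h2]; exact: rl_anti.
by move/(perm_sortP rl_total rl_trans anti).
Qed.

Definition nzk (o : option R) : bool :=
  if o is Some k then k != Node (SCst V t (0%R : F)) [::] else false.

Lemma nz_fkey (e : T) : nonzero_factor e = nzk (fkey e).
Proof.
case: e => [a|v|a b|a b|f a] //=.
- rewrite /fkey /= /key /=; apply/idP/idP => [h|/eqP h]; last by apply/eqP => e; apply: h; rewrite e.
  by apply/eqP => -[] e; rewrite e eqxx in h.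
- by rewrite /fkey /= /key /=; apply/esym/eqP.
- rewrite /fkey /=; case: (noplus a) => //; rewrite /key /=; apply/esym/eqP; discriminate.
Qed.

Lemma is_monomialE (u : T) : is_monomial u = all nzk (prodkeys u).
Proof. by rewrite /is_monomial /prodkeys all_map; apply: eq_all => e; rewrite /= nz_fkey. Qed.

Lemma M_sum (u : T) : M u = \sum_(e <- sum_seq u) M e + inv badM (sumkeys u).
Proof.
elim: u => [a|v|a IHa b IHb|a IHa b IHb|f a IHa] /=; rewrite ?big_seq1 ?addn0 //.
rewrite /sumkeys /= map_cat inv_cat big_cat /= IHa IHb /sumkeys; lia.
Qed.

Lemma M_prod (u : T) : M u = \sum_(e <- prod_seq u) M e + inv badF (prodkeys u).
Proof.
elim: u => [a|v|a IHa b IHb|a IHa b IHb|f a IHa] /=; rewrite ?big_seq1 ?addn0 //.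
by rewrite /prodkeys /= map_cat inv_cat big_cat /= IHa IHb /prodkeys; lia.
Qed.

Definition isAdd (u : T) := if u is Add _ _ then true else false.
Definition isMul (u : T) := if u is Mul _ _ then true else false.

Lemma sum_bigsum (ms : seq T) : ms != [::] -> all (predC isAdd) ms -> sum_seq (bigsum ms) = ms.
Proof.
elim: ms => // x [|y ms] IH _ /= /andP[hx hr]; first by case: x hx.
by rewrite IH //=; case: x hx.
Qed.

Lemma prod_bigprod (fs : seq T) : fs != [::] -> all (predC isMul) fs -> prod_seq (bigprod fs) = fs.
Proof.
elim: fs => // x [|y fs] IH _ /= /andP[hx hr]; first by case: x hx.
by rewrite IH //=; case: x hx.
Qed.

Lemma I_bigsum (ms : seq T) : ms != [::] -> I (bigsum ms) = \sum_(m <- ms) I m + (size ms).-1.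
Proof.
elim: ms => // x [|y ms] IH _; first by rewrite /= big_seq1 addn0.
rewrite [bigsum _]/= [I _]/= IH // !big_cons /=; lia.
Qed.

Lemma I_bigprod (fs : seq T) : fs != [::] -> I (bigprod fs) = \prod_(m <- fs) I m.
Proof.
elim: fs => // x [|y fs] IH _; first by rewrite /= big_seq1.
by rewrite [bigprod _]/= [I _]/= IH // !big_cons.
Qed.

Lemma noplus_prodseq (u : T) : noplus u = all (@noplus F V t) (prod_seq u).
Proof.
elim: u => [a|v|a IHa b IHb|a IHa b IHb|f a IHa] //=; rewrite ?andbT //.
by rewrite all_cat IHa IHb.
Qed.

Definition Inv (u v : T) := [/\ perm_eq (sumkeys u) (sumkeys v), perm_eq (prodkeys u) (prodkeys v),
  perm_eq (keyprod u) (keyprod v) & noplus u = noplus v].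

Lemma mkey_perm (u v : T) : perm_eq (prodkeys u) (prodkeys v) -> perm_eq (keyprod u) (keyprod v) ->
  mkey u = mkey v.
Proof.
move=> p1 p2; rewrite /mkey !is_monomialE (perm_all _ p1) /monokey (sort_perm_rl p2) //.
Qed.

Lemma aeq_inv (u v : T) : aeq u v ->
  I u = I v /\ M u = M v /\ sumkeys u = sumkeys v /\ prodkeys u = prodkeys v /\
  keyprod u = keyprod v /\ noplus u = noplus v.
Proof.
elim=> {u v}.
- by [].
- by move=> u v _ [-> [-> [-> [-> [-> ->]]]]].
- by move=> u v w _ [-> [-> [-> [-> [-> ->]]]]] _ [-> [-> [-> [-> [-> ->]]]]].
- move=> a a' b b' _ [I1 [M1 [S1 [P1 [K1 N1]]]]] _ [I2 [M2 [S2 [P2 [K2 N2]]]]].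
  rewrite /= I1 M1 I2 M2 S1 S2; do !split => //.
  by rewrite /sumkeys /= !map_cat -/(sumkeys a') -/(sumkeys b') -/(sumkeys a) -/(sumkeys b) S1 S2.
- move=> a a' b b' _ [I1 [M1 [S1 [P1 [K1 N1]]]]] _ [I2 [M2 [S2 [P2 [K2 N2]]]]].
  have Pe : prodkeys (Mul a b) = prodkeys (Mul a' b') by rewrite /prodkeys /= !map_cat -/(prodkeys a) -/(prodkeys b) -/(prodkeys a') -/(prodkeys b') P1 P2.
  have Ke : keyprod (Mul a b) = keyprod (Mul a' b') by rewrite /= K1 K2.
  do !split => //; rewrite /= ?I1 ?I2 ?M1 ?M2 ?P1 ?P2 ?N1 ?N2 //.
  by rewrite /sumkeys /= (mkey_perm (u := Mul a b) (v := Mul a' b')) ?Pe ?Ke.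
- move=> f a a' _ [I1 [M1 [S1 [P1 [K1 N1]]]]].
  by rewrite /= I1 M1 K1 N1 /sumkeys /prodkeys /= /mkey /fkey /is_monomial /= /monokey /key /= K1 N1.
- move=> a b d; do !split; rewrite /= ?andbA //; try lia.
  + rewrite /sumkeys /= !map_cat !cross_catl !cross_catr; lia.
  + by rewrite /sumkeys /= !map_cat catA.
- move=> a b d; do !split; rewrite /= ?andbA ?catA //; try lia.
  + rewrite /prodkeys /= !map_cat !cross_catl !cross_catr; lia.
  + by rewrite /sumkeys /= /mkey /is_monomial /monokey /= !catA.
  + by rewrite /prodkeys /= !map_cat catA.
Qed.


Lemma inv_map {A B : Type} (f : A -> B) (bad : B -> B -> bool) s :
  inv bad (map f s) = inv (relpre f bad) s.
Proof. by elim: s => //= x s ->; rewrite count_map. Qed.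

Lemma inv_eq_in (P : pred T) (b1 b2 : T -> T -> bool) s :
  (forall x y, P x -> P y -> b1 x y = b2 x y) -> all P s -> inv b1 s = inv b2 s.
Proof.
move=> H; elim: s => //= x s IH /andP[Px Ps]; rewrite IH //; congr addn.
apply: eq_in_count => y hy /=; apply: H => //; exact: (allP Ps).
Qed.

Lemma invM (s : seq T) : all (@is_monomial F V t) s ->
  inv badM (map mkey s) = inv (fun x y => ~~ lexG rl x y) (map monokey s).
Proof.
move=> Hs; rewrite !inv_map; apply: (inv_eq_in (P := @is_monomial F V t)) => // x y hx hy.
by rewrite /relpre /= /mkey hx hy.
Qed.

Lemma invF (s : seq T) : all (@is_factor F V t) s ->
  inv badF (map fkey s) = inv (fun x y => ~~ rl x y) (map key s).
Proof.
move=> Hs; rewrite !inv_map; apply: (inv_eq_in (P := @is_factor F V t)) => // x y hx hy.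
by rewrite /relpre /= /fkey hx hy.
Qed.

Lemma bigsum2 (ms : seq T) : 1 < size ms -> exists a b, bigsum ms = Add a b.
Proof. by case: ms => [|x [|y r]] //= _; exists x, (bigsum (y :: r)). Qed.

Lemma bigprod2 (ms : seq T) : 1 < size ms -> exists a b, bigprod ms = Mul a b.
Proof. by case: ms => [|x [|y r]] //= _; exists x, (bigprod (y :: r)). Qed.

Lemma Inv_Add (a b a' b' : T) : perm_eq (sumkeys (Add a b)) (sumkeys (Add a' b')) ->
  Inv (Add a b) (Add a' b').
Proof. by move=> h; split. Qed.

Lemma Inv_Mul (a b a' b' : T) : perm_eq (prodkeys (Mul a b)) (prodkeys (Mul a' b')) ->
  perm_eq (keyprod (Mul a b)) (keyprod (Mul a' b')) -> noplus (Mul a b) = noplus (Mul a' b') ->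
  Inv (Mul a b) (Mul a' b').
Proof.
move=> p1 p2 n; split => //.
by rewrite /sumkeys /= (mkey_perm p1 p2).
Qed.

Lemma rule_dec (u v : T) : rule ges c u v ->
  I v < I u \/ (I v = I u /\ M v < M u /\ Inv u v).
Proof.
case=> {u v}.
- move=> ms Hm Hs; set ms' := sort (geq_p ges) ms.
  have sz : 1 < size ms by case: ms Hm Hs {ms'} => [|x [|y r]].
  have pm : perm_eq ms' ms by rewrite perm_sort.
  have Hm' : all (@is_monomial F V t) ms' by rewrite all_sort.
  have nA : all (predC isAdd) ms by apply: sub_all Hm => -[].
  have nA' : all (predC isAdd) ms' by apply: sub_all Hm' => -[].
  have ne : ms != [::] by case: (ms) sz.
  have sz' : 1 < size ms' by rewrite size_sort.
  have ne' : ms' != [::] by case: (ms') sz'.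
  have Eo : map monokey ms' = sort (lexG rl) (map monokey ms).
    rewrite sort_map /ms'; congr map; apply: (eq_in_sort (P := @is_monomial F V t)) => // x y hx hy.
    exact: geq_p_key.
  right; split; last split.
  + by rewrite !I_bigsum // (perm_big _ pm) size_sort.
  + rewrite !M_sum /sumkeys !sum_bigsum // (perm_big _ pm) ltn_add2l !invM // Eo inv_sort //.
    rewrite lt0n inv0; apply/negP => /pairwise_sorted; rewrite sorted_map.
    have tr : transitive (relpre monokey (lexG rl)) by move=> y x z; apply: lx_trans.
    move/(sorted_sort tr) => E; apply: Hs; rewrite -[RHS]E.
    apply: (eq_in_sort (P := @is_monomial F V t)) => // x y hx hy; exact: geq_p_key.
  + have [a [b Eab]] := bigsum2 sz; have [a' [b' Eab']] := bigsum2 sz'.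
    rewrite Eab Eab'; apply: Inv_Add; rewrite -Eab -Eab' /sumkeys !sum_bigsum //.
    by apply: perm_map; rewrite perm_sym.
- move=> fs Hf Hs; set fs' := sort (geq_l ges) fs.
  have sz : 1 < size fs by case: fs Hf Hs {fs'} => [|x [|y r]].
  have pm : perm_eq fs' fs by rewrite perm_sort.
  have Hf' : all (@is_factor F V t) fs' by rewrite all_sort.
  have nA : all (predC isMul) fs by apply: sub_all Hf => -[].
  have nA' : all (predC isMul) fs' by apply: sub_all Hf' => -[].
  have ne : fs != [::] by case: (fs) sz.
  have sz' : 1 < size fs' by rewrite size_sort.
  have ne' : fs' != [::] by case: (fs') sz'.
  have Eo : map key fs' = sort rl (map key fs).
    rewrite sort_map /fs'; congr map; apply: (eq_in_sort (P := @is_factor F V t)) => // x y hx hy.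
    exact: geq_l_key.
  right; split; last split.
  + by rewrite !I_bigprod // (perm_big _ pm).
  + rewrite !M_prod /prodkeys !prod_bigprod // (perm_big _ pm) ltn_add2l !invF // Eo inv_sort //.
    rewrite lt0n inv0; apply/negP => /pairwise_sorted; rewrite sorted_map.
    have tr : transitive (relpre key rl) by move=> y x z; apply: rl_trans.
    move/(sorted_sort tr) => E; apply: Hs; rewrite -[RHS]E.
    apply: (eq_in_sort (P := @is_factor F V t)) => // x y hx hy; exact: geq_l_key.
  + have [a [b Eab]] := bigprod2 sz; have [a' [b' Eab']] := bigprod2 sz'.
    rewrite Eab Eab'; apply: Inv_Mul; rewrite -Eab -Eab'.
    * by rewrite /prodkeys !prod_bigprod //; apply: perm_map; rewrite perm_sym.
    * by rewrite !keyprod_prod !prod_bigprod //; apply: perm_map; rewrite perm_sym.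
    * by rewrite !noplus_prodseq !prod_bigprod //; apply: perm_all; rewrite perm_sym.
- move=> u; left => /=; move: (I_ge2 u); lia.
- move=> u; left => /=; move: (I_ge2 u); lia.
- move=> u; left => /=; move: (I_ge2 u); lia.
- move=> u; left => /=; move: (I_ge2 u); lia.
- move=> u; left => /=; move: (I_ge2 u); lia.
- move=> u; left => /=; move: (I_ge2 u); lia.
- move=> u; left => /=; move: (I_ge2 u); lia.
- move=> u u1 u2; left => /=; move: (I_ge2 u) (I_ge2 u1) (I_ge2 u2); nia.
- move=> u u1 u2; left => /=; move: (I_ge2 u) (I_ge2 u1) (I_ge2 u2); nia.
- move=> f u1 u2; left => /=; move: (I_ge2 u1) (I_ge2 u2); lia.
- by move=> f; left.
Qed.

Lemma rstep_dec (u v : T) : rstep ges c u v ->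
  I v < I u \/ (I v = I u /\ M v < M u /\ Inv u v).
Proof.
elim=> {u v}.
- by move=> u v; apply: rule_dec.
- move=> a a' b _ [lt|[eI [lM [p1 p2 p3 p4]]]]; first by left => /=; lia.
  right; split; first by rewrite /= eI.
  split; first by rewrite /= (cross_perm _ p1 (perm_refl _)) ltn_add2r; lia.
  by apply: Inv_Add; rewrite /sumkeys /= !map_cat; apply: perm_cat.
- move=> a b b' _ [lt|[eI [lM [p1 p2 p3 p4]]]]; first by left => /=; lia.
  right; split; first by rewrite /= eI.
  split; first by rewrite /= (cross_perm _ (perm_refl _) p1) ltn_add2r; lia.
  by apply: Inv_Add; rewrite /sumkeys /= !map_cat; apply: perm_cat.
- move=> a a' b _ [lt|[eI [lM [p1 p2 p3 p4]]]].
    left => /=; move: (I_ge2 b); nia.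
  right; split; first by rewrite /= eI.
  split; first by rewrite /= (cross_perm _ p2 (perm_refl _)) ltn_add2r; lia.
  apply: Inv_Mul; rewrite /= ?p4 //.
    by rewrite /prodkeys /= !map_cat; apply: perm_cat.
  by apply: perm_cat.
- move=> a b b' _ [lt|[eI [lM [p1 p2 p3 p4]]]].
    left => /=; move: (I_ge2 a); nia.
  right; split; first by rewrite /= eI.
  split; first by rewrite /= (cross_perm _ (perm_refl _) p2) ltn_add2r; lia.
  apply: Inv_Mul; rewrite /= ?p4 //.
    by rewrite /prodkeys /= !map_cat; apply: perm_cat.
  by apply: perm_cat.
- move=> f a a' _ [lt|[eI [lM [p1 p2 p3 p4]]]]; first by left => /=; lia.
  right; split; first by rewrite /= eI.
  split => //.
  have Ke : keyprod (Aff f a) = keyprod (Aff f a') by rewrite /= (sort_perm_rl p3).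
  have Pe : prodkeys (Aff f a) = prodkeys (Aff f a').
    by rewrite /prodkeys /= /fkey /= p4 /key -/(keyprod (Aff f a)) Ke.
  split; rewrite ?Ke ?Pe //=.
  by rewrite /sumkeys /= (mkey_perm (u := Aff f a) (v := Aff f a')) ?Ke ?Pe.
Qed.

Lemma step_dec (u v : T) : step ges c u v -> I v < I u \/ (I v = I u /\ M v < M u).
Proof.
case=> u' [v' [h1 h2 h3]].
have [I1 [M1 _]] := aeq_inv h1; have [I3 [M3 _]] := aeq_inv h3.
case: (rstep_dec h2) => [lt|[eI [lM _]]]; [left|right]; lia.
Qed.

Lemma no_inf n m (s : nat -> T) : I (s 0) = n -> M (s 0) = m ->
  ~ (forall i, step ges c (s i) (s i.+1)).
Proof.
elim/ltn_ind: n m s => n IHn m; elim/ltn_ind: m => m IHm s Hn Hm H.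
case: (step_dec (H 0)) => [lt|[eI lM]].
  by apply: (IHn (I (s 1)) _ (M (s 1)) (fun i => s i.+1)) => //; rewrite -Hn.
by apply: (IHm (M (s 1)) _ (fun i => s i.+1)) => //; [rewrite -Hm | rewrite eI].
Qed.

End Main.

Theorem lemma2 (n : nat) (F : finFieldType) (HF : #|F| = (2 ^ n)%N)
  (V : Type) (t : nat) (ges : sym F V t -> sym F V t -> bool)
  (Hges : total_order ges) (c : 'I_t -> F) :
  terminating ges c.
Proof. move=> s; exact: (@no_inf F V t ges Hges c _ _ s erefl erefl). Qed.
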